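(* Let $q$ be a prime power and let $ER(q)$ be the Erdős–Rényi graph. Then every independent set $S$ of $ER(q)$ satisfies \[ |S|\le \frac{\sqrt q+\sqrt{q+4(q+1)\frac{q+\sqrt q+1}{q^2+q+1}}}{2\,\frac{q+\sqrt q+1}{q^2+q+1}}. \]
   Context: Let $V=\mathbb F_q^3$. The vertices of $ER(q)$ are the $q^2+q+1$ one-dimensional subspaces of $V$ (points of $PG(2,q)$); points spanned by $x$ and $y$ are adjacent iff $x^Ty=0$. The $q+1$ points with $x^Tx=0$ are adjacent to themselves (carry loops). An independent set is a set of vertices no two distinct members of which are adjacent; looped vertices may belong to it. *)

(* Defs.v *)
From HB Require Import structures.
From mathcomp Require Import all_boot all_order all_algebra all_field.
Set Implicit Arguments. Unset Strict Implicit. Unset Printing Implicit Defensive.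
Import Order.TTheory GRing.Theory Num.Theory.
Local Open Scope ring_scope.

(* V = F^3 as row vectors; a one-dimensional subspace is represented by its
   canonical row-space matrix <<v>>%MS (v <> 0), so distinct subspaces are
   distinct elements of 'M[F]_3. *)
Definition ER_points (F : finFieldType) : {set 'M[F]_3} :=
  [set (<<v>>%MS : 'M[F]_3) | v in [set v : 'rV[F]_3 | v != 0]].

Definition ER_adj (F : finFieldType) (U W : 'M[F]_3) : bool :=
  [exists x : 'rV[F]_3, exists y : 'rV[F]_3,
     [&& x != 0, y != 0, (<<x>>%MS == U), (<<y>>%MS == W) &
         (x *m y^T == 0)]].

(* independent set: a set of vertices, no two distinct members adjacent
   (looped vertices allowed) *)
Definition ER_independent (F : finFieldType) (S : {set 'M[F]_3}) : Prop :=
  S \subset ER_points F /\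
  forall U W, U \in S -> W \in S -> U != W -> ~~ ER_adj U W.

Definition ER_ratio (R : rcfType) (q : R) : R :=
  (q + Num.sqrt q + 1) / (q ^+ 2 + q + 1).

Definition ER_bound (R : rcfType) (q : R) : R :=
  (Num.sqrt q + Num.sqrt (q + 4 * (q + 1) * ER_ratio q)) / (2 * ER_ratio q).

(* Main.v *)
Require Import Defs.
From HB Require Import structures.
From mathcomp Require Import all_boot all_order all_algebra all_field.
From mathcomp Require Import mxabelem.
From mathcomp Require Import zify ring lra.
Import Order.TTheory GRing.Theory Num.Theory.
Set Implicit Arguments. Unset Strict Implicit. Unset Printing Implicit Defensive.
Local Open Scope ring_scope.


Definition dot (F : finFieldType) (x y : 'rV[F]_3) : F := (x *m y^T) 0 0.

Lemma dotE (F : finFieldType) (x y : 'rV[F]_3) : (x *m y^T == 0) = (dot x y == 0).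
Proof.
rewrite /dot; apply/eqP/eqP => [->|h]; first by rewrite mxE.
by apply/matrixP => i j; rewrite !ord1 h mxE.
Qed.

Lemma dotC (F : finFieldType) (x y : 'rV[F]_3) : dot x y = dot y x.
Proof. by rewrite /dot !mxE; apply: eq_bigr => j _; rewrite !mxE mulrC. Qed.

Lemma dotDl (F : finFieldType) (a : F) (x y z : 'rV[F]_3) :
  dot (a *: x + y) z = a * dot x z + dot y z.
Proof. by rewrite /dot mulmxDl -scalemxAl !mxE. Qed.

Lemma kercard (F : finFieldType) k (B : 'M[F]_(3,k)) :
  #|[set v : 'rV[F]_3 | v *m B == 0]| = (#|F| ^ (3 - \rank B))%N.
Proof.
rewrite -mxrank_ker -card_rowg; apply: eq_card => v.
by rewrite !inE sub_kermx.
Qed.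

Lemma kercard0 (F : finFieldType) k (B : 'M[F]_(3,k)) :
  #|[set v : 'rV[F]_3 | (v != 0) && (v *m B == 0)]| = (#|F| ^ (3 - \rank B) - 1)%N.
Proof.
rewrite -kercard (cardsD1 0 [set v : 'rV[F]_3 | v *m B == 0]) inE mul0mx eqxx.
rewrite add1n subSS subn0; apply: eq_card => v; by rewrite !inE.
Qed.

Lemma samept (F : finFieldType) (x u : 'rV[F]_3) : x != 0 -> u != 0 ->
  (<<x>>%MS == <<u>>%MS) = (x <= u)%MS.
Proof.
move=> nx nu; apply/eqP/idP => [e|sxu].
  by rewrite -(genmxE u) -e genmxE.
apply/genmxP; have [_ <-] := mxrank_leqif_eq sxu.
by rewrite !rank_rV nx nu.
Qed.

Lemma rankpair (F : finFieldType) (x y : 'rV[F]_3) : x != 0 -> y != 0 ->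
  \rank (col_mx x y) = if <<x>>%MS == <<y>>%MS then 1%N else 2%N.
Proof.
move=> nx ny; rewrite -addsmxE.
have sx : (x <= x + y)%MS by apply: addsmxSl.
have := mxrank_leqif_sup sx; rewrite rank_rV nx /= => -[le e].
case: ifP => yx.
  have yx' : (y <= x)%MS by rewrite -samept // eq_sym yx.
  apply/eqP; rewrite eqn_leq le andbT.
  have: (x + y <= x)%MS by rewrite addsmx_sub submx_refl.
  by move/mxrankS; rewrite rank_rV nx.
have r2 : (\rank (x + y)%MS <= 2)%N.
  by rewrite addsmxE (leq_trans (rank_leq_row _)).
apply/eqP; rewrite eqn_leq r2 /=.
rewrite ltn_neqAle le andbT e addsmx_sub submx_refl /=.
by rewrite -samept // eq_sym yx.
Qed.

Definition Xs (F : finFieldType) (S : {set 'M[F]_3}) : {set 'rV[F]_3} :=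
  [set x | (x != 0) && (<<x>>%MS \in S)].

Lemma dotZl (F : finFieldType) (a : F) (x z : 'rV[F]_3) : dot (a *: x) z = a * dot x z.
Proof. by rewrite /dot -scalemxAl mxE. Qed.

Lemma indep_orth (F : finFieldType) (S : {set 'M[F]_3}) x y :
  ER_independent S -> x \in Xs S -> y \in Xs S -> dot x y = 0 -> (x <= y)%MS.
Proof.
move=> [_ ind] hx hy d; rewrite !inE in hx hy.
case/andP: hx => nx xS; case/andP: hy => ny yS.
rewrite -samept //; apply/negPn/negP => ne.
have := ind _ _ xS yS ne; apply/negP/negPn.
apply/existsP; exists x; apply/existsP; exists y.
by rewrite nx ny !eqxx dotE d eqxx.
Qed.

Lemma ptcard (F : finFieldType) (u : 'rV[F]_3) : u != 0 ->
  #|[set x : 'rV[F]_3 | (x != 0) && (x <= u)%MS]| = (#|F| - 1)%N.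
Proof.
move=> nu; have h := cardsD1 0 (rowg u).
rewrite card_rowg rank_rV nu inE sub0mx expn1 add1n in h.
rewrite h subSS subn0; apply: eq_card => x; by rewrite !inE.
Qed.

Lemma cardXs (F : finFieldType) (S : {set 'M[F]_3}) :
  ER_independent S -> #|Xs S| = (#|S| * (#|F| - 1))%N.
Proof.
move=> [sub _].
rewrite -sum1_card (partition_big (fun x => <<x>>%MS) (mem S)) /=; last first.
  by move=> x; rewrite inE => /andP[].
rewrite -sum_nat_const; apply: eq_bigr => U US.
have := (subsetP sub) U US; rewrite /ER_points => /imsetP [u]; rewrite inE => nu eU; subst U.
rewrite sum1dep_card -(ptcard nu); apply: eq_card => x; rewrite !inE.
case: (eqVneq x 0) => [->|nx] //=.
rewrite samept //; case hx: (x <= u)%MS; rewrite ?andbF //.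
have -> : <<x>>%MS = <<u>>%MS by apply/eqP; rewrite samept.
by rewrite US.
Qed.



Lemma cardsum (T : finType) (P Q : pred T) :
  (\sum_(x | P x) (Q x : nat) = #|[set x | P x && Q x]|)%N.
Proof.
rewrite -sum1dep_card big_mkcondr /=; apply: eq_bigr => x _; by case: (Q x).
Qed.

Lemma sumconst (T : finType) (P : pred T) (c : nat) :
  (\sum_(x | P x) c = #|[set x | P x]| * c)%N.
Proof. by rewrite -sum1dep_card big_distrl /=; apply: eq_bigr => x _; rewrite mul1n. Qed.

Definition Dv (F : finFieldType) (S : {set 'M[F]_3}) (v : 'rV[F]_3) : nat :=
  (\sum_(x in Xs S) ((x *m v^T == 0%R) : nat))%N.

Lemma orth_sym (F : finFieldType) (x v : 'rV[F]_3) : (x *m v^T == 0) = (v *m x^T == 0).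
Proof. by rewrite -trmx_eq0 trmx_mul trmxK. Qed.

Lemma sumD (F : finFieldType) (S : {set 'M[F]_3}) :
  (\sum_(v : 'rV[F]_3 | v != 0%R) Dv S v = #|Xs S| * (#|F| ^ 2 - 1))%N.
Proof.
rewrite /Dv exchange_big /= -sum_nat_const; apply: eq_bigr => x.
rewrite inE => /andP [nx _].
rewrite cardsum.
have := kercard0 x^T; rewrite mxrank_tr rank_rV nx => <-.
by apply: eq_card => v; rewrite !inE orth_sym.
Qed.

Lemma sumD2 (F : finFieldType) (S : {set 'M[F]_3}) :
  (\sum_(v : 'rV[F]_3 | v != 0%R) (Dv S v) ^ 2 =
   #|Xs S| * (#|Xs S| * (#|F| - 1) + (#|F| - 1) * ((#|F| ^ 2 - 1) - (#|F| - 1))))%N.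
Proof.
rewrite /Dv.
under eq_bigr => v _ do rewrite expnS expn1 big_distrlr /=.
rewrite exchange_big /= -sum_nat_const; apply: eq_bigr => x.
rewrite inE => /andP [nx xS].
rewrite exchange_big /=.
have inner : forall y, y \in Xs S ->
   (\sum_(v : 'rV[F]_3 | v != 0%R) ((x *m v^T == 0%R) : nat) * ((y *m v^T == 0%R) : nat) =
    (#|F| - 1) + (<<x>>%MS == <<y>>%MS) * ((#|F| ^ 2 - 1) - (#|F| - 1)))%N.
  move=> y; rewrite inE => /andP [ny yS].
  under eq_bigr => v _ do rewrite mulnb.
  rewrite cardsum.
  have := kercard0 (col_mx x y)^T; rewrite mxrank_tr rankpair //.
  have -> : [set v : 'rV[F]_3 | (v != 0%R) && (v *m (col_mx x y)^T == 0%R)] =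
            [set v : 'rV[F]_3 | (v != 0%R) && ((x *m v^T == 0%R) && (y *m v^T == 0%R))].
    apply/setP => v; rewrite !inE tr_col_mx mul_mx_row row_mx_eq0.
    by rewrite (orth_sym x) (orth_sym y).
  move=> ->; case: ifP => _ /=.
    rewrite mul1n subnKC //; apply: leq_sub2r.
    by rewrite expnS expn1 leq_pmulr // (ltnW (card_finNzRing_gt1 _)).
  by rewrite mul0n addn0.
rewrite (eq_bigr _ inner) big_split /= sum_nat_const -big_distrl /=.
rewrite (cardsum (fun y => y \in Xs S)).
have -> : #|[set y | (y \in Xs S) && (<<x>>%MS == <<y>>%MS)]| = (#|F| - 1)%N.
  rewrite -(ptcard nx); apply: eq_card => y; rewrite !inE.
  case: (eqVneq y 0) => [->|ny] //=.
  rewrite eq_sym samept //; case hy: (y <= x)%MS; rewrite ?andbF //.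
  have -> : <<y>>%MS = <<x>>%MS by apply/eqP; rewrite samept.
  by rewrite xS.
by [].
Qed.

Lemma sumSX (F : finFieldType) (S : {set 'M[F]_3}) : ER_independent S ->
 (\sum_(v : 'rV[F]_3 | v != 0%R) Dv S v * (v \in Xs S)
    <= (#|F| - 1) * #|[set v | (v \in Xs S) && (dot v v == 0%R)]|)%N.
Proof.
move=> ind.
have -> : (\sum_(v : 'rV[F]_3 | v != 0%R) Dv S v * (v \in Xs S)
          = \sum_(v in Xs S) Dv S v)%N.
  rewrite big_mkcond [RHS]big_mkcond /=; apply: eq_bigr => v _.
  case vX: (v \in Xs S); last by rewrite muln0; case: (v != 0).
  by move: (vX); rewrite inE => /andP [-> _]; rewrite muln1.
rewrite -cardsum big_distrr /=; apply: leq_sum => v vX.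
have nv : v != 0 by move: (vX); rewrite inE => /andP[].
case: (eqVneq (dot v v) 0) => [vv|vv].
  rewrite muln1 /Dv cardsum -(ptcard nv); apply: subset_leq_card.
  apply/subsetP => x; rewrite inE => /andP [xX xo]; rewrite inE.
  have nx : x != 0 by move: (xX); rewrite inE => /andP[].
  rewrite nx /=; apply: (indep_orth ind xX vX); apply/eqP; by rewrite -dotE.
rewrite muln0 leqn0 /Dv sum_nat_eq0; apply/forall_inP => x xX.
rewrite eqn0Ngt lt0b; apply/negP => xo.
have : (x <= v)%MS by apply: (indep_orth ind xX vX); apply/eqP; rewrite -dotE.
case/sub_rVP => a ea.
have nx : x != 0 by move: (xX); rewrite inE => /andP[].
move: xo; rewrite dotE ea dotZl mulf_eq0 (negbTE vv) orbF => /eqP a0.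
by move: nx; rewrite ea a0 scale0r eqxx.
Qed.



Definition i0 : 'I_3 := @Ordinal 3 0 isT.
Definition i1 : 'I_3 := @Ordinal 3 1 isT.
Definition i2 : 'I_3 := @Ordinal 3 2 isT.

Lemma sum3 (F : finFieldType) (f : 'I_3 -> F) : \sum_j f j = f i0 + f i1 + f i2.
Proof.
rewrite !big_ord_recl big_ord0 addr0 addrA.
by congr (f _ + f _ + f _); apply/val_inj.
Qed.

Lemma rv3eq (F : finFieldType) (v w : 'rV[F]_3) :
  v 0 i0 = w 0 i0 -> v 0 i1 = w 0 i1 -> v 0 i2 = w 0 i2 -> v = w.
Proof.
move=> e0 e1 e2; apply/rowP => j; case: j => [[|[|[|//]]] Hj].
- by rewrite (bool_irrelevance Hj (isT : 0 < 3)%N).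
- by rewrite (bool_irrelevance Hj (isT : 1 < 3)%N).
- by rewrite (bool_irrelevance Hj (isT : 2 < 3)%N).
Qed.

Lemma dotvv (F : finFieldType) (v : 'rV[F]_3) :
  dot v v = v 0 i0 * v 0 i0 + v 0 i1 * v 0 i1 + v 0 i2 * v 0 i2.
Proof. by rewrite /dot mxE sum3 !mxE. Qed.

Lemma dotB (F : finFieldType) (x y z : 'rV[F]_3) : dot (x - y) z = dot x z - dot y z.
Proof. by rewrite /dot mulmxBl !mxE. Qed.

Lemma dotBr (F : finFieldType) (x y z : 'rV[F]_3) : dot x (y - z) = dot x y - dot x z.
Proof. by rewrite dotC dotB !(dotC x). Qed.

Lemma dotZr (F : finFieldType) (a : F) (x z : 'rV[F]_3) : dot x (a *: z) = a * dot x z.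
Proof. by rewrite dotC dotZl dotC. Qed.

Lemma abs_char2 (F : finFieldType) (A : {set 'rV[F]_3}) :
  (2%:R : F) = 0 -> (forall v, v \in A -> (v != 0) && (dot v v == 0)) ->
  (#|A| <= #|F| ^ 2 - 1)%N.
Proof.
move=> h2 hA.
have key : forall v, v \in A -> v 0 i2 = - (v 0 i0 + v 0 i1).
  move=> v /hA /andP [_ /eqP]; rewrite dotvv => e.
  have : (v 0 i0 + v 0 i1 + v 0 i2) ^+ 2 = 0.
    rewrite -e; have -> : (v 0 i0 + v 0 i1 + v 0 i2) ^+ 2 =
      v 0 i0 * v 0 i0 + v 0 i1 * v 0 i1 + v 0 i2 * v 0 i2 +
      2%:R * (v 0 i0 * v 0 i1 + v 0 i1 * v 0 i2 + v 0 i0 * v 0 i2) by ring.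
    by rewrite h2 mul0r addr0.
  move/eqP; rewrite expf_eq0 /= => /eqP e'.
  by apply: (addrI (v 0 i0 + v 0 i1)); rewrite e' subrr.
pose f := fun v : 'rV[F]_3 => (v 0 i0, v 0 i1).
have finj : {in A &, injective f}.
  move=> v w vA wA [e0 e1]; apply: rv3eq => //.
  by rewrite (key v vA) (key w wA) e0 e1.
rewrite -(card_in_imset finj).
have -> : (#|F| ^ 2 - 1)%N = #|[set~ ((0 : F), (0 : F))]|.
  by rewrite cardsC1 card_prod -subn1 expnS expn1.
apply: subset_leq_card; apply/subsetP => ab /imsetP [v vA ->].
rewrite in_setC1; apply/negP => /eqP [e0 e1].
have := key v vA; rewrite e0 e1 addr0 oppr0 => e2.
move: (hA v vA) => /andP [nv _]; move: nv; apply/negP; rewrite negbK.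
by apply/eqP; apply: rv3eq; rewrite ?mxE.
Qed.

Lemma kerlemma (F : finFieldType) (p w z : 'rV[F]_3) :
  p != 0 -> ~~ (w <= p)%MS -> dot p p = 0 -> dot w p = 0 ->
  dot z p = 0 -> dot z w = 0 -> (z <= p)%MS.
Proof.
move=> np nwp pp wp zp zw.
have nw : w != 0 by apply: contraNneq nwp => ->; rewrite sub0mx.
have r2 : \rank (col_mx p w) = 2%N.
  by rewrite rankpair // eq_sym samept // (negbTE nwp).
have rK : \rank (kermx (col_mx p w)^T) = 1%N by rewrite mxrank_ker mxrank_tr r2.
have inK : forall y, dot y p = 0 -> dot y w = 0 -> (y <= kermx (col_mx p w)^T)%MS.
  move=> y yp yw; rewrite sub_kermx tr_col_mx mul_mx_row row_mx_eq0.
  by rewrite !dotE yp yw eqxx.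
have pK := inK p pp (etrans (dotC p w) wp).
have [_] := mxrank_leqif_eq pK; rewrite rank_rV np rK eqxx => /esym /andP [_ Kp].
exact: submx_trans (inK z zp zw) Kp.
Qed.

Lemma abs_odd (F : finFieldType) (S : {set 'M[F]_3}) : ER_independent S ->
  (2%:R : F) != 0 ->
  (#|[set v | (v \in Xs S) && (dot v v == 0%R)]| <= #|F| ^ 2 - 1)%N.
Proof.
move=> ind h2; set A := [set v | _].
case: (set_0Vmem A) => [->|[p pA]]; first by rewrite cards0.
move: (pA); rewrite inE => /andP [pX /eqP pp].
have np : p != 0 by move: (pX); rewrite inE => /andP[].
have [i ni] : exists i, ~~ (row i (kermx p^T) <= p)%MS.
  have : ~~ (kermx p^T <= p)%MS.
    apply/negP => /mxrankS.
    by rewrite mxrank_ker mxrank_tr rank_rV np.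
  by move/row_subPn.
set w := row i (kermx p^T) in ni.
have wp : dot w p = 0.
  apply/eqP; rewrite -dotE -sub_kermx; exact: row_sub.
rewrite -(cardsID [set x | (x <= p)%MS] A).
have c1 : (#|A :&: [set x | (x <= p)%MS]| <= #|F| - 1)%N.
  rewrite -(ptcard np); apply: subset_leq_card; apply/subsetP => x.
  rewrite !inE => /andP [/andP [/andP [nx _] _] xp]; by rewrite nx xp.
pose g := fun v : 'rV[F]_3 => (dot v p, dot v w).
have ginj : {in A :\: [set x | (x <= p)%MS] &, injective g}.
  move=> v v'; rewrite !inE => /andP [nvp /andP [vX0 /eqP vv]].
  move=> /andP [nv'p /andP [v'X0 /eqP v'v']] [e1 e2].
  have vX : v \in Xs S by rewrite inE.
  have : (v - v' <= p)%MS.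
    apply: (kerlemma np ni pp wp); by rewrite dotB ?e1 ?e2 subrr.
  case/sub_rVP => a ea.
  have ev' : v' = v - a *: p by rewrite -ea opprB addrC subrK.
  have vp0 : dot v p != 0.
    apply/negP => /eqP vp; move: nvp; rewrite (indep_orth ind vX pX vp) //.
  have : dot v' v' = - (a * dot v p * 2%:R).
    rewrite ev' !dotB !dotBr !dotZl !dotZr vv pp (dotC p v); ring.
  rewrite v'v' => /esym /eqP; rewrite oppr_eq0 !mulf_eq0 (negbTE vp0) (negbTE h2) !orbF.
  by move=> /eqP a0; rewrite ev' a0 scale0r subr0.
rewrite -(card_in_imset ginj).
have c2 : (#|g @: (A :\: [set x | (x <= p)%MS])| <= (#|F| - 1) * #|F|)%N.
  have -> : ((#|F| - 1) * #|F|)%N = #|setX [set~ (0 : F)] [set: F]|.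
    by rewrite cardsX cardsC1 cardsT -subn1.
  apply: subset_leq_card; apply/subsetP => ab /imsetP [v].
  rewrite !inE => /andP [nvp /andP [vX0 _]] ->; rewrite andbT /=.
  have vX : v \in Xs S by rewrite inE.
  apply/negP => /eqP vp; move: nvp; rewrite (indep_orth ind vX pX vp) //.
have q1 : (1 < #|F|)%N by apply: card_finNzRing_gt1.
apply: leq_trans (leq_add c1 c2) _.
have -> : (#|F| ^ 2 = #|F| * #|F|)%N by rewrite expnS expn1.
nia.
Qed.

Lemma absbound (F : finFieldType) (S : {set 'M[F]_3}) : ER_independent S ->
  (#|[set v | (v \in Xs S) && (dot v v == 0%R)]| <= #|F| ^ 2 - 1)%N.
Proof.
move=> ind; case: (eqVneq (2%:R : F) 0) => h2; last exact: abs_odd.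
apply: abs_char2 => // v; rewrite inE => /andP [vX ->].
by move: vX; rewrite inE => /andP [->].
Qed.



Lemma alg1 (R : rcfType) (q g s X : R) : q = g ^+ 2 -> 0 < g -> 1 < q ->
  let r := (q + g + 1) / (q ^+ 2 + q + 1) in
  let m := s * (q - 1) in
  let t := (q - 1) * g in
  let c := (q - 1) * r * s in
  0 <= m * (m * (q - 1) + (q - 1) * (q ^+ 2 - q)) + 2 * t * X - 2 * c * (m * (q ^+ 2 - 1))
       + (t ^+ 2 - 2 * t * c) * m + c ^+ 2 * (q ^+ 3 - 1) ->
  X <= (q - 1) ^+ 2 * (q + 1) ->
  r * s ^+ 2 - g * s - (q + 1) <= 0.
Proof.
move=> qg g0 q1 r m t c H HX.
have n0 : q ^+ 2 + q + 1 != 0 by apply: lt0r_neq0; nra.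
have hid : m * (m * (q - 1) + (q - 1) * (q ^+ 2 - q)) + 2 * t * X - 2 * c * (m * (q ^+ 2 - 1))
       + (t ^+ 2 - 2 * t * c) * m + c ^+ 2 * (q ^+ 3 - 1)
     = 2 * g * (q - 1) * (X + (q - 1) ^+ 2 * (g * s - r * s ^+ 2)).
  rewrite /m /t /c /r; subst q; field; exact: n0.
rewrite hid in H.
have p1 : 0 < 2 * g * (q - 1) by nra.
rewrite pmulr_rge0 // in H.
have p2 : 0 < (q - 1) ^+ 2 by nra.
have H2 : 0 <= (q - 1) ^+ 2 * ((q + 1) + (g * s - r * s ^+ 2)) by nra.
rewrite pmulr_rge0 // in H2; lra.
Qed.

Lemma alg2 (R : rcfType) (q g r s : R) : q = g ^+ 2 -> 0 < g -> 0 < r ->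
  r * s ^+ 2 - g * s - (q + 1) <= 0 ->
  s <= (g + Num.sqrt (q + 4 * (q + 1) * r)) / (2 * r).
Proof.
move=> qg g0 r0 H.
set d := Num.sqrt _.
have d0 : 0 <= d by apply: sqrtr_ge0.
have dd : d ^+ 2 = q + 4 * (q + 1) * r by rewrite sqr_sqrtr //; nra.
rewrite ler_pdivlMr; last by nra.
nra.
Qed.



Lemma sumX (F : finFieldType) (S : {set 'M[F]_3}) :
  (\sum_(v : 'rV[F]_3 | v != 0%R) ((v \in Xs S) : nat) = #|Xs S|)%N.
Proof.
rewrite cardsum; apply: eq_card => v; rewrite inE.
by case vX: (v \in Xs S); rewrite ?andbF // andbT; move: vX; rewrite inE => /andP[].
Qed.

Lemma sum1 (F : finFieldType) :
  (\sum_(v : 'rV[F]_3 | v != 0%R) 1 = #|F| ^ 3 - 1)%N.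
Proof.
have h := cardC1 (0 : 'rV[F]_3); rewrite card_mx mul1n -subn1 in h.
by rewrite sum1dep_card -h; apply: eq_card => v; rewrite !inE.
Qed.

Theorem mainTheorem10 (F : finFieldType) (R : rcfType) (S : {set 'M[F]_3}) :
  ER_independent S ->
  (#|S|%:R : R) <= ER_bound (#|F|%:R : R).
Proof.
move=> ind.
have q1 : (1 < #|F|)%N by apply: card_finNzRing_gt1.
pose Dr := fun v => ((Dv S v)%:R : R).
pose er := fun v : 'rV[F]_3 => (((v \in Xs S) : nat)%:R : R).
set qr := (#|F|%:R : R).
set g := Num.sqrt qr.
have qr1 : 1 < qr by rewrite ltr1n.
have qg : qr = g ^+ 2 by rewrite sqr_sqrtr // ler0n.
have g0 : 0 < g by rewrite sqrtr_gt0 (lt_trans ltr01 qr1).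
set r := (qr + g + 1) / (qr ^+ 2 + qr + 1).
have r0 : 0 < r by apply: divr_gt0; nra.
set sr := (#|S|%:R : R).
set t := (qr - 1) * g.
set c := (qr - 1) * r * sr.
set SXr := ((\sum_(v : 'rV[F]_3 | v != 0%R) (Dv S v * (v \in Xs S)))%N)%:R : R.
have H0 : 0 <= \sum_(v : 'rV[F]_3 | v != 0%R) (Dr v + t * er v - c) ^+ 2.
  by apply: sumr_ge0 => v _; apply: sqr_ge0.
have Hexp : \sum_(v : 'rV[F]_3 | v != 0%R) (Dr v + t * er v - c) ^+ 2 =
   ((\sum_(v : 'rV[F]_3 | v != 0%R) (Dv S v ^ 2))%N)%:R + 2 * t * SXr
   - 2 * c * ((\sum_(v : 'rV[F]_3 | v != 0%R) Dv S v)%N)%:R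
   + (t ^+ 2 - 2 * t * c) * ((\sum_(v : 'rV[F]_3 | v != 0%R) ((v \in Xs S) : nat))%N)%:R
   + c ^+ 2 * ((\sum_(v : 'rV[F]_3 | v != 0%R) 1)%N)%:R.
  rewrite /SXr !natr_sum !mulr_sumr -sumrN -!big_split /=; apply: eq_bigr => v _.
  rewrite /Dr /er natrX natrM; case: (v \in Xs S) => /=; ring.
have E1 : ((#|F| - 1)%N%:R : R) = qr - 1 by rewrite natrB 1?ltnW.
have E2 : ((#|F| ^ 2 - 1)%N%:R : R) = qr ^+ 2 - 1.
  by rewrite natrB ?natrX // expn_gt0 (ltnW q1).
have E3 : (((#|F| ^ 2 - 1) - (#|F| - 1))%N%:R : R) = qr ^+ 2 - qr.
  rewrite natrB ?E1 ?E2; first by ring.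
  apply: leq_sub2r; by rewrite expnS expn1 leq_pmulr // ltnW.
have E4 : ((#|F| ^ 3 - 1)%N%:R : R) = qr ^+ 3 - 1.
  by rewrite natrB ?natrX // expn_gt0 (ltnW q1).
rewrite sumD sumD2 sumX sum1 (cardXs ind) in Hexp.
rewrite !(natrD, natrM) E3 E1 E2 E4 -/sr in Hexp.
have HX : SXr <= (qr - 1) ^+ 2 * (qr + 1).
  have h := leq_trans (sumSX ind) (leq_mul (leqnn _) (absbound ind)).
  rewrite /SXr (_ : (qr - 1) ^+ 2 * (qr + 1) = ((#|F| - 1) * (#|F| ^ 2 - 1))%N%:R).
    by rewrite ler_nat.
  rewrite natrM E1 E2; ring.
have key := alg1 qg g0 qr1 _ HX.
have := key sr; rewrite -Hexp => /(_ H0) h.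
have := alg2 qg g0 r0 h.
by rewrite /ER_bound /ER_ratio.
Qed.
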